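(* If $\sum_{i=1}^M b_i\ge1$, then for every $\epsilon>0$, $$\bar\Delta_{\mathrm{opt}}(\epsilon)\ge\bar\Delta_{\mathrm{opt},2}(\epsilon)\ge\sum_{i=1}^M\Big[\frac{w_i}{\min\{b_i,\beta^\star\sqrt{w_i}\}}+w_i\Big],$$ where $\beta^\star\in[0,\max_l b_l/\sqrt{w_l}]$ is the root of $\sum_{i=1}^M\min\{b_i,\beta^\star\sqrt{w_i}\}=1$.
   Context: Fix an integer $M\ge1$, weights $w_1,\dots,w_M>0$, constants $b_1,\dots,b_M>0$, and $\epsilon>0$. For $\mathbf r\in(0,\infty)^M$ write $S(\mathbf r)=\sum_{i=1}^M r_i$ and define $$\bar\Delta(\mathbf r)=\sum_{l=1}^M \frac{w_l e^{-r_l\epsilon}}{r_l}\, e^{\epsilon S(\mathbf r)}\big(1+S(\mathbf r)\big)+\sum_{l=1}^M w_l,\qquad \sigma_l(\mathbf r)=\frac{(1-e^{-r_l\epsilon})S(\mathbf r)+r_le^{-r_l\epsilon}}{S(\mathbf r)+1}.$$ Problem 1: minimize $\bar\Delta(\mathbf r)$ over $\mathbf r\in(0,\infty)^M$ subject to $\sigma_l(\mathbf r)\le b_l$ for all $l$; its optimal (infimum) value is $\bar\Delta_{\mathrm{opt}}(\epsilon)$. Problem 2: minimize $\bar\Delta(\mathbf r)$ over $\mathbf r\in(0,\infty)^M$ subject to $r_l\le b_l\big(S(\mathbf r)+1\big)$ for all $l$; its optimal (infimum) value is $\bar\Delta_{\mathrm{opt},2}(\epsilon)$. *)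

(* Defs.v *)
From Stdlib Require Import Reals Lra Lia.
Open Scope R_scope.

(* sum_lt n f = f 0 + ... + f (n-1)  (indices 0..n-1 encode 1..M) *)
Fixpoint sum_lt (n : nat) (f : nat -> R) : R :=
  match n with
  | O => 0
  | S k => sum_lt k f + f k
  end.

(* max_lt n f = max_{i<n} f i  (for n >= 1 and f >= 0 this is the true max) *)
Fixpoint max_lt (n : nat) (f : nat -> R) : R :=
  match n with
  | O => 0
  | S k => Rmax (max_lt k f) (f k)
  end.

Definition Ssum (M : nat) (r : nat -> R) : R := sum_lt M r.

Definition Delta_bar (M : nat) (w : nat -> R) (eps : R) (r : nat -> R) : R :=
  sum_lt M (fun l => w l * exp (- r l * eps) / r l)
    * exp (eps * Ssum M r) * (1 + Ssum M r)
  + sum_lt M w.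

Definition sigma (M : nat) (eps : R) (r : nat -> R) (l : nat) : R :=
  ((1 - exp (- r l * eps)) * Ssum M r + r l * exp (- r l * eps))
    / (Ssum M r + 1).

Definition positive_vec (M : nat) (r : nat -> R) : Prop :=
  forall i, (i < M)%nat -> 0 < r i.

Definition feasible1 (M : nat) (b : nat -> R) (eps : R) (r : nat -> R) : Prop :=
  positive_vec M r /\ forall l, (l < M)%nat -> sigma M eps r l <= b l.

Definition feasible2 (M : nat) (b : nat -> R) (r : nat -> R) : Prop :=
  positive_vec M r /\ forall l, (l < M)%nat -> r l <= b l * (Ssum M r + 1).

Definition is_inf_value (P : (nat -> R) -> Prop) (f : (nat -> R) -> R) (v : R) : Prop :=
  (forall r, P r -> v <= f r) /\
  (forall u, (forall r, P r -> u <= f r) -> u <= v).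

Definition Delta_opt_is (M : nat) (w b : nat -> R) (eps v : R) : Prop :=
  is_inf_value (feasible1 M b eps) (Delta_bar M w eps) v.

Definition Delta_opt2_is (M : nat) (w b : nat -> R) (eps v : R) : Prop :=
  is_inf_value (feasible2 M b) (Delta_bar M w eps) v.

(* Main.v *)
Require Import Defs.
From Stdlib Require Import Reals Lra Lia.
Open Scope R_scope.

Lemma sum_lt_le n f g : (forall i, (i < n)%nat -> f i <= g i) -> sum_lt n f <= sum_lt n g.
Proof. induction n; simpl; intros H. lra. assert (f n <= g n) by (apply H; lia).
  assert (sum_lt n f <= sum_lt n g) by (apply IHn; intros; apply H; lia). lra. Qed.

Lemma sum_lt_plus n f g : sum_lt n (fun i => f i + g i) = sum_lt n f + sum_lt n g.
Proof. induction n; simpl. lra. rewrite IHn; lra. Qed.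

Lemma sum_lt_scal n c f : sum_lt n (fun i => c * f i) = c * sum_lt n f.
Proof. induction n; simpl. lra. rewrite IHn; lra. Qed.

Lemma sum_lt_ext n f g : (forall i, (i < n)%nat -> f i = g i) -> sum_lt n f = sum_lt n g.
Proof. induction n; simpl; intros H. lra. rewrite IHn, (H n); [reflexivity|lia|intros; apply H; lia]. Qed.

Lemma sum_lt_term n f l : (forall i, (i < n)%nat -> 0 <= f i) -> (l < n)%nat -> f l <= sum_lt n f.
Proof. induction n; simpl; intros H Hl. lia.
  assert (0 <= sum_lt n f). { clear IHn Hl. induction n; simpl. lra.
   assert (0 <= f n) by (apply H; lia). assert (0 <= sum_lt n f) by (apply IHn; intros; apply H; lia). lra. }
  destruct (Nat.eq_dec l n). subst. lra.
  assert (f l <= sum_lt n f) by (apply IHn; [intros; apply H; lia| lia]).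
  assert (0 <= f n) by (apply H; lia). lra. Qed.

Lemma term2 (w b beta x : R) : 0 < w -> 0 < b -> 0 < beta -> 0 < x -> x <= b ->
  w / x >= w / Rmin b (beta * sqrt w) - (x - Rmin b (beta * sqrt w)) / (beta * beta).
Proof.
  intros Hw Hb Hbe Hx Hxb.
  assert (Hs : 0 < sqrt w) by (apply sqrt_lt_R0; lra).
  assert (Hss : sqrt w * sqrt w = w) by (apply sqrt_sqrt; lra).
  set (s := sqrt w) in *.
  unfold Rmin; destruct (Rle_dec b (beta * s)) as [H|H].
  -
    assert (H2 : b * b <= beta * beta * w) by (rewrite <- Hss; replace (beta*beta*(s*s)) with ((beta*s)*(beta*s)) by ring; apply Rmult_le_compat; lra).
    assert (E : w / x - (w / b - (x - b) / (beta * beta)) =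
       w * (x - b) * (x - b) / (x * b * b) + (x - b) * (1/(beta*beta) - w/(b*b))).
    { field. lra. }
    assert (0 <= w * (x - b) * (x - b) / (x * b * b)).
    { apply Rmult_le_pos. assert (0 <= (x-b)*(x-b)) by apply Rle_0_sqr. replace (w * (x - b) * (x - b)) with (w * ((x-b)*(x-b))) by ring; apply Rmult_le_pos; lra.
      left; apply Rinv_0_lt_compat; repeat apply Rmult_lt_0_compat; lra. }
    assert (1/(beta*beta) <= w/(b*b)).
    { apply (Rmult_le_reg_r (beta*beta*(b*b))). repeat apply Rmult_lt_0_compat; lra.
      replace (1 / (beta * beta) * (beta * beta * (b * b))) with (b*b) by (field; lra).
      replace (w / (b * b) * (beta * beta * (b * b))) with (beta*beta*w) by (field; lra). lra. }
    assert (0 <= (x - b) * (1/(beta*beta) - w/(b*b))) by nra.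
    lra.
  - assert (E : w / x - (w / (beta * s) - (x - beta * s) / (beta * beta)) =
       (x - beta * s) * (x - beta * s) / (x * beta * beta)).
    { rewrite <- Hss. field. lra. }
    assert (0 <= (x - beta * s) * (x - beta * s) / (x * beta * beta)).
    { apply Rmult_le_pos. apply Rle_0_sqr. left; apply Rinv_0_lt_compat; repeat apply Rmult_lt_0_compat; lra. }
    lra.
Qed.

Theorem lemma3 (M : nat) (w b : nat -> R) (eps : R)
  (HM : (1 <= M)%nat)
  (Hw : forall i, (i < M)%nat -> 0 < w i)
  (Hb : forall i, (i < M)%nat -> 0 < b i)
  (Heps : 0 < eps)
  (Hsum : 1 <= sum_lt M b)
  (beta : R)
  (Hbeta0 : 0 <= beta)
  (Hbeta1 : beta <= max_lt M (fun l => b l / sqrt (w l)))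
  (Hroot : sum_lt M (fun i => Rmin (b i) (beta * sqrt (w i))) = 1)
  (v1 v2 : R)
  (Hv1 : Delta_opt_is M w b eps v1)
  (Hv2 : Delta_opt2_is M w b eps v2) :
  v1 >= v2 /\
  v2 >= sum_lt M (fun i => w i / Rmin (b i) (beta * sqrt (w i)) + w i).
Proof.
  destruct Hv1 as [Hv1a Hv1b]; destruct Hv2 as [Hv2a Hv2b].
  split.
  - apply Rle_ge, Hv1b. intros r [Hpos Hsig]. apply Hv2a. split; auto.
    intros l Hl. specialize (Hsig l Hl). unfold Defs.sigma in Hsig.
    set (S := Ssum M r) in *.
    assert (HrS : r l <= S) by (apply sum_lt_term; auto; intros; left; auto).
    assert (Hrl := Hpos l Hl).
    assert (He : 0 < exp (- r l * eps)) by apply exp_pos.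
    assert (He1 : exp (- r l * eps) < 1).
    { rewrite <- exp_0. apply exp_increasing. nra. }
    assert (HS1 : 0 < S + 1) by lra.
    assert (r l <= (1 - exp (- r l * eps)) * S + r l * exp (- r l * eps)) by nra.
    assert (r l / (S + 1) <= b l).
    { eapply Rle_trans; [|exact Hsig]. unfold Rdiv.
      apply Rmult_le_compat_r; [left; apply Rinv_0_lt_compat; lra | lra]. }
    apply (Rmult_le_compat_r (S+1)) in H0; [|lra].
    replace (r l / (S + 1) * (S + 1)) with (r l) in H0 by (field; lra). lra.
  - assert (Hbeta : 0 < beta).
    { destruct Hbeta0 as [|E]; auto. exfalso. subst beta.
      rewrite (sum_lt_ext _ _ (fun _ => 0)) in Hroot.
      + clear -Hroot. induction M; simpl in *; lra.
      + intros i Hi. rewrite Rmult_0_l. unfold Rmin.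
        destruct (Rle_dec (b i) 0); auto. specialize (Hb i Hi); lra. }
    apply Rle_ge, Hv2b. intros r [Hpos Hc].
    set (S := Ssum M r) in *.
    assert (HS0 : 0 <= S).
    { assert (0 < r 0%nat) by (apply Hpos; lia).
      assert (r 0%nat <= S) by (apply sum_lt_term; [intros; left; apply Hpos; auto | lia]). lra. }
    set (m := fun i => Rmin (b i) (beta * sqrt (w i))).
    set (x := fun i => r i / (1 + S)).
    unfold Delta_bar. fold S.
    rewrite sum_lt_plus.
    apply Rplus_le_compat_r.
    rewrite Rmult_assoc, Rmult_comm, <- sum_lt_scal.
    apply Rle_trans with (sum_lt M (fun i => w i / m i - (x i - m i) / (beta * beta))).
    + unfold Rminus at 1.
      rewrite sum_lt_plus.
      assert (sum_lt M (fun i => - ((x i - m i) / (beta * beta))) >= 0).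
      { rewrite (sum_lt_ext _ _ (fun i => (- / (beta*beta)) * (x i + (-1) * m i))).
        2:{ intros; unfold Rdiv; ring. }
        rewrite sum_lt_scal, sum_lt_plus, sum_lt_scal. fold m in Hroot. rewrite Hroot.
        assert (sum_lt M x = S / (1 + S)).
        { unfold x. rewrite (sum_lt_ext _ _ (fun i => (/ (1 + S)) * r i)).
          rewrite sum_lt_scal. change (sum_lt M r) with S. field. lra. intros; unfold Rdiv; ring. }
        rewrite H.
        assert (S / (1 + S) <= 1).
        { apply (Rmult_le_reg_r (1+S)). lra. replace (S / (1 + S) * (1 + S)) with S by (field; lra). lra. }
        assert (0 < / (beta * beta)) by (apply Rinv_0_lt_compat; nra).
        assert (0 <= / (beta*beta) * (1 - S / (1 + S))) by (apply Rmult_le_pos; lra). nra. }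
      change (sum_lt M (fun i : nat => w i / Rmin (b i) (beta * sqrt (w i)))) with (sum_lt M (fun i : nat => w i / m i)); lra.
    + apply sum_lt_le. intros i Hi.
      assert (Hri := Hpos i Hi). assert (Hwi := Hw i Hi).
      assert (HrS : r i <= S) by (apply sum_lt_term; auto; intros; left; auto).
      apply Rle_trans with (w i / x i).
      * apply Rge_le. unfold m. apply term2; auto.
        unfold x. apply Rdiv_lt_0_compat; lra.
        unfold x. apply (Rmult_le_reg_r (1+S)). lra.
        replace (r i / (1 + S) * (1 + S)) with (r i) by (field; lra).
        specialize (Hc i Hi). lra.
      * unfold x.
        replace (w i / (r i / (1 + S))) with (w i * (1 + S) / r i * 1) by (field; lra).
        replace (exp (eps * S) * (1 + S) * (w i * exp (- r i * eps) / r i))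
          with (w i * (1 + S) / r i * (exp (- r i * eps) * exp (eps * S))) by (field; lra).
        apply Rmult_le_compat_l.
        { apply Rlt_le, Rdiv_lt_0_compat; nra. }
        rewrite <- exp_plus. rewrite <- exp_0.
        destruct (Req_dec (- r i * eps + eps * S) 0) as [E|E]. rewrite E; lra.
        left. apply exp_increasing. nra.
Qed.
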